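(* Fix $\delta>0$, and for $r\in\mathbb R$ let $\mathrm A_r(\xi):=e^{\delta\langle\xi\rangle^{1/2}}\langle\xi\rangle^r$ for $\xi\in\mathbb R$. Let $s\ge1$ and $c\in(0,1)$. Then, for $\xi,\eta\in\mathbb R$: (i) if $|\xi-\eta|\le c|\eta|$, then $|\mathrm A_s(\xi)-\mathrm A_s(\eta)|\lesssim\mathrm A_{s-\frac34}(\eta)\,\mathrm A_1(\xi-\eta)\,\langle\xi\rangle^{\frac14}$; (ii) if $|\eta|\le c|\xi-\eta|$, then $|\mathrm A_s(\xi)-\mathrm A_s(\eta)|\lesssim\mathrm A_0(\eta)\,\mathrm A_s(\xi-\eta)$; (iii) if $c|\eta|\le|\xi-\eta|\le c^{-1}|\eta|$, then $|\mathrm A_s(\xi)-\mathrm A_s(\eta)|\lesssim\mathrm A_{s-1}(\eta)\,\mathrm A_1(\xi-\eta)$.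
   Context: $\langle\xi\rangle=(1+|\xi|^2)^{1/2}$. Implicit constants may depend on $s$, $c$ and $\delta$ but not on $\xi,\eta$. *)

(* Defs.v *)
From Stdlib Require Import Reals.
Open Scope R_scope.

Definition jb (x : R) : R := sqrt (1 + x ^ 2).

(* A_r(xi) = exp(delta * <xi>^{1/2}) * <xi>^r, with real exponent r
   (<xi> >= 1 > 0, so Rpower is the usual power). *)
Definition Aw (delta r xi : R) : R :=
  exp (delta * sqrt (jb xi)) * Rpower (jb xi) r.

(* Main.v *)
Require Import Defs.
From Stdlib Require Import Reals Lra Psatz.
Open Scope R_scope.

Lemma exp_le x y : x <= y -> exp x <= exp y.
Proof. intros [H|H]; [left; apply exp_increasing; auto| subst; lra]. Qed.

Lemma ln_le x y : 0 < x -> x <= y -> ln x <= ln y.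
Proof. intros Hx [H|H]; [left; apply ln_increasing; auto| subst; lra]. Qed.

Lemma ln_le_sub x : 0 < x -> ln x <= x - 1.
Proof. intros Hx. pose proof (exp_ineq1_le (ln x)). rewrite exp_ln in H; lra. Qed.

Lemma ln_diff x y : 0 < x -> 0 < y -> (ln x - ln y) * y <= x - y.
Proof.
  intros Hx Hy.
  assert (Hq : 0 < x / y) by (unfold Rdiv; apply Rmult_lt_0_compat; auto; apply Rinv_0_lt_compat; auto).
  pose proof (ln_le_sub _ Hq) as H.
  unfold Rdiv in H. rewrite ln_mult, ln_Rinv in H; auto; [|apply Rinv_0_lt_compat; auto].
  apply Rmult_le_compat_r with (r := y) in H; [|lra].
  replace ((x * / y - 1) * y) with (x - y) in H by (field; lra). lra.
Qed.

Lemma sqrt_le_of A u : 0 <= u -> A <= u ^ 2 -> sqrt A <= u.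
Proof. intros Hu HA. rewrite <- (sqrt_pow2 u Hu). apply sqrt_le_1_alt; auto. Qed.

Lemma le_sqrt_of A u : 0 <= u -> u ^ 2 <= A -> u <= sqrt A.
Proof. intros Hu HA. rewrite <- (sqrt_pow2 u Hu). apply sqrt_le_1_alt; auto. Qed.

Lemma sqrt_add_le a b : 0 <= a -> 0 <= b -> sqrt (a + b) <= sqrt a + sqrt b.
Proof.
  intros Ha Hb. apply sqrt_le_of.
  - pose proof (sqrt_pos a); pose proof (sqrt_pos b); lra.
  - pose proof (sqrt_sqrt a Ha); pose proof (sqrt_sqrt b Hb).
    pose proof (sqrt_pos a); pose proof (sqrt_pos b). nra.
Qed.

Lemma sqrt_exp b : 0 < b -> sqrt b = exp (ln b / 2).
Proof.
  intros Hb. pose proof (sqrt_lt_R0 b Hb) as Hs.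
  assert (ln b = 2 * ln (sqrt b)).
  { rewrite <- (sqrt_sqrt b) at 1 by lra. rewrite ln_mult; auto; ring. }
  rewrite H. replace (2 * ln (sqrt b) / 2) with (ln (sqrt b)) by field.
  rewrite exp_ln; auto.
Qed.

Lemma expdiff u v : Rabs (exp u - exp v) <= exp (Rmax u v) * Rabs (u - v).
Proof.
  destruct (Rle_dec v u) as [H|H].
  - rewrite Rmax_left by auto.
    pose proof (exp_ineq1_le (v - u)). pose proof (exp_le _ _ H).
    rewrite Rabs_right by lra. rewrite Rabs_right by lra.
    replace (exp v) with (exp u * exp (v - u)) by (rewrite <- exp_plus; f_equal; ring).
    pose proof (exp_pos u). nra.
  - rewrite Rmax_right by lra.
    pose proof (exp_ineq1_le (u - v)). assert (u <= v) by lra. pose proof (exp_le _ _ H1).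
    rewrite Rabs_left1 by lra. rewrite Rabs_left1 by lra.
    replace (exp u) with (exp v * exp (u - v)) by (rewrite <- exp_plus; f_equal; ring).
    pose proof (exp_pos v). nra.
Qed.

Lemma Aw_exp d r x : Aw d r x = exp (d * sqrt (jb x) + r * ln (jb x)).
Proof. unfold Aw, Rpower. rewrite exp_plus. reflexivity. Qed.

Lemma jb_ge1 x : 1 <= jb x.
Proof. unfold jb. apply le_sqrt_of; [lra|]. nra. Qed.

Lemma sq_abs x : Rabs x ^ 2 = x ^ 2.
Proof. unfold Rabs; destruct Rcase_abs; ring. Qed.

Lemma abs_le_jb x : Rabs x <= jb x.
Proof. unfold jb. apply le_sqrt_of; [apply Rabs_pos|]. rewrite sq_abs. lra. Qed.

Lemma jb_sq x : jb x ^ 2 = 1 + x ^ 2.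
Proof. unfold jb. rewrite <- Rsqr_pow2. apply Rsqr_sqrt. nra. Qed.

Lemma jb_tri x y : jb (x + y) <= jb x + Rabs y.
Proof.
  assert (H0 : 0 <= jb x) by (pose proof (jb_ge1 x); lra).
  unfold jb at 1. apply sqrt_le_of.
  - pose proof (Rabs_pos y); lra.
  - pose proof (jb_sq x). pose proof (sq_abs y). pose proof (abs_le_jb x).
    pose proof (Rabs_pos y).
    assert (x * y <= Rabs x * Rabs y).
    { rewrite <- Rabs_mult. apply Rle_abs. }
    nra.
Qed.

Lemma jb_scale k x y : 1 <= k -> Rabs x <= k * Rabs y -> jb x <= k * jb y.
Proof.
  intros Hk H. unfold jb at 1. apply sqrt_le_of.
  - pose proof (jb_ge1 y); nra.
  - pose proof (jb_sq y). pose proof (sq_abs y). pose proof (sq_abs x).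
    pose proof (Rabs_pos x).
    assert (Rabs x ^ 2 <= (k * Rabs y)^2) by (apply pow_incr; auto).
    nra.
Qed.

Lemma jb_low k x y : 0 <= k <= 1 -> k * Rabs y <= Rabs x -> k * jb y <= jb x.
Proof.
  intros Hk H. unfold jb at 2. apply le_sqrt_of.
  - pose proof (jb_ge1 y); nra.
  - pose proof (jb_sq y). pose proof (sq_abs y). pose proof (sq_abs x).
    pose proof (Rabs_pos y).
    assert ((k * Rabs y) ^ 2 <= Rabs x ^ 2) by (apply pow_incr; nra).
    assert (k^2 <= 1) by nra.
    nra.
Qed.

Lemma diff_bound a b d del s c : 0 < c < 1 -> 1 <= b -> (1 - c) * b <= a ->
  Rabs (a - b) <= d -> 0 < del -> 1 <= s ->
  Rabs ((del * sqrt a + s * ln a) - (del * sqrt b + s * ln b))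
    <= (del + s) * / (1 - c) * d * / sqrt b.
Proof.
  intros Hc Hb Ha Hd Hdel Hs.
  assert (Ha0 : 0 < a) by nra.
  assert (Hq : 0 < sqrt b) by (apply sqrt_lt_R0; lra).
  assert (Hqb : sqrt b <= b).
  { pose proof (sqrt_sqrt b). assert (1 <= sqrt b) by (apply le_sqrt_of; lra). nra. }
  assert (h1 : Rabs (sqrt a - sqrt b) * sqrt b <= Rabs (a - b)).
  { replace (a - b) with ((sqrt a - sqrt b) * (sqrt a + sqrt b))
      by (pose proof (sqrt_sqrt a); pose proof (sqrt_sqrt b); nra).
    rewrite Rabs_mult. pose proof (sqrt_pos a).
    rewrite (Rabs_right (sqrt a + sqrt b)) by lra.
    pose proof (Rabs_pos (sqrt a - sqrt b)). nra. }
  assert (h2 : Rabs (ln a - ln b) * ((1 - c) * b) <= Rabs (a - b)).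
  { pose proof (ln_diff a b Ha0 ltac:(lra)). pose proof (ln_diff b a ltac:(lra) Ha0).
    destruct (Rle_dec b a).
    - assert (ln b <= ln a) by (apply ln_le; lra).
      rewrite !Rabs_right by lra. nra.
    - assert (ln a <= ln b) by (apply ln_le; lra).
      rewrite Rabs_left1 by lra. rewrite (Rabs_left1 (a - b)) by lra. nra. }
  assert (h3 : Rabs ((del * sqrt a + s * ln a) - (del * sqrt b + s * ln b))
     <= del * Rabs (sqrt a - sqrt b) + s * Rabs (ln a - ln b)).
  { replace ((del * sqrt a + s * ln a) - (del * sqrt b + s * ln b))
      with (del * (sqrt a - sqrt b) + s * (ln a - ln b)) by ring.
    eapply Rle_trans; [apply Rabs_triang|]. rewrite !Rabs_mult.
    rewrite (Rabs_right del), (Rabs_right s) by lra. lra. }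
  eapply Rle_trans; [apply h3|].
  apply (Rmult_le_reg_r ((1 - c) * sqrt b)); [nra|].
  replace ((del + s) * / (1 - c) * d * / sqrt b * ((1 - c) * sqrt b)) with ((del + s) * d)
    by (field; lra).
  pose proof (Rabs_pos (sqrt a - sqrt b)). pose proof (Rabs_pos (ln a - ln b)).
  pose proof (Rabs_pos (a - b)).
  assert (H4 : Rabs (ln a - ln b) * ((1 - c) * sqrt b) <= Rabs (ln a - ln b) * ((1 - c) * b)).
  { apply Rmult_le_compat_l; [lra|]. apply Rmult_le_compat_l; lra. }
  assert (H5 : Rabs (sqrt a - sqrt b) * sqrt b * (1 - c) <= Rabs (a - b)).
  { pose proof (Rmult_le_pos _ _ (Rabs_pos (sqrt a - sqrt b)) (sqrt_pos b)).
    set (P := Rabs (sqrt a - sqrt b) * sqrt b) in *. nra. }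
  assert (H6 : del * (Rabs (sqrt a - sqrt b) * sqrt b * (1 - c)) <= del * d).
  { apply Rmult_le_compat_l; lra. }
  assert (H7 : s * (Rabs (ln a - ln b) * ((1 - c) * sqrt b)) <= s * d).
  { apply Rmult_le_compat_l; lra. }
  replace ((del * Rabs (sqrt a - sqrt b) + s * Rabs (ln a - ln b)) * ((1 - c) * sqrt b))
    with (del * (Rabs (sqrt a - sqrt b) * sqrt b * (1 - c)) + s * (Rabs (ln a - ln b) * ((1 - c) * sqrt b))) by ring.
  lra.
Qed.

Lemma abs_facts xi eta :
  Rabs xi <= Rabs eta + Rabs (xi - eta) /\
  Rabs eta <= Rabs xi + Rabs (xi - eta).
Proof.
  split.
  - replace xi with (eta + (xi - eta)) at 1 by ring. apply Rabs_triang.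
  - replace eta with (xi + - (xi - eta)) at 1 by ring.
    eapply Rle_trans; [apply Rabs_triang|]. rewrite Rabs_Ropp. lra.
Qed.

Lemma jb_a_le xi eta : jb xi <= jb eta + jb (xi - eta).
Proof.
  replace xi with (eta + (xi - eta)) at 1 by ring.
  eapply Rle_trans; [apply jb_tri|]. pose proof (abs_le_jb (xi - eta)). lra.
Qed.

Lemma jb_pos x : 0 < jb x.
Proof. pose proof (jb_ge1 x); lra. Qed.

Theorem lemma6p5 (delta s c : R) (hdelta : 0 < delta) (hs : 1 <= s)
    (hc0 : 0 < c) (hc1 : c < 1) :
  exists C : R, 0 < C /\
  (forall xi eta : R, Rabs (xi - eta) <= c * Rabs eta ->
     Rabs (Aw delta s xi - Aw delta s eta)
       <= C * (Aw delta (s - 3/4) eta * Aw delta 1 (xi - eta)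
               * Rpower (jb xi) (1/4))) /\
  (forall xi eta : R, Rabs eta <= c * Rabs (xi - eta) ->
     Rabs (Aw delta s xi - Aw delta s eta)
       <= C * (Aw delta 0 eta * Aw delta s (xi - eta))) /\
  (forall xi eta : R, c * Rabs eta <= Rabs (xi - eta) ->
     Rabs (xi - eta) <= / c * Rabs eta ->
     Rabs (Aw delta s xi - Aw delta s eta)
       <= C * (Aw delta (s - 1) eta * Aw delta 1 (xi - eta))).
Proof.
  set (K := s * ln 2 + s * ln (1 + / c) - ln c - 2 * ln (1 - c)).
  exists ((delta + s + 2) * exp K).
  assert (Hic : 0 < / c) by (apply Rinv_0_lt_compat; lra).
  assert (Hic1 : 1 <= / c).
  { rewrite <- Rinv_1. apply Rinv_le_contravar; lra. }
  assert (L2 : ln 2 >= 0) by (pose proof ln_lt_2; lra).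
  assert (Lc : ln c <= 0) by (pose proof (ln_le_sub c hc0); lra).
  assert (L1c : ln (1 - c) <= 0) by (pose proof (ln_le_sub (1 - c) ltac:(lra)); lra).
  assert (Lic : 0 <= ln (1 + / c)) by (rewrite <- ln_1; apply ln_le; lra).
  assert (Lpc : ln (1 + c) <= ln 2) by (apply ln_le; lra).
  assert (sL2 : 0 <= s * ln 2) by nra.
  assert (sLic : 0 <= s * ln (1 + / c)) by nra.
  assert (two : forall U V Q, U <= K + Q -> V <= K + Q ->
            Rabs (exp U - exp V) <= (delta + s + 2) * exp (K + Q)).
  { intros U V Q HU HV. pose proof (exp_le _ _ HU). pose proof (exp_le _ _ HV).
    pose proof (exp_pos U). pose proof (exp_pos V). pose proof (exp_pos (K + Q)).
    apply Rabs_le. nra. }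
  split; [pose proof (exp_pos K); nra|].
  split; [|split].
  -
    intros xi eta H.
    destruct (abs_facts xi eta) as [F1 F2].
    set (a := jb xi). set (b := jb eta). set (d := jb (xi - eta)).
    assert (Ha : 0 < a) by apply jb_pos. assert (Hb : 1 <= b) by apply jb_ge1.
    assert (Hd : 1 <= d) by apply jb_ge1.
    assert (Hab : (1 - c) * b <= a) by (apply jb_low; nra).
    assert (Hab2 : a <= (1 + c) * b) by (apply jb_scale; nra).
    assert (Hadd : a <= b + d) by apply jb_a_le.
    assert (Hamb : Rabs (a - b) <= d).
    { pose proof (jb_tri eta (xi - eta)). replace (eta + (xi - eta)) with xi in H0 by ring.
      pose proof (jb_tri xi (eta - xi)). replace (xi + (eta - xi)) with eta in H1 by ring.
      rewrite Rabs_minus_sym in H1. pose proof (abs_le_jb (xi - eta)).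
      apply Rabs_le. fold a b d in H0, H1, H2. lra. }
    rewrite !Aw_exp. unfold Rpower. fold a b d.
    eapply Rle_trans; [apply expdiff|].
    eapply Rle_trans.
    { apply Rmult_le_compat_l; [left; apply exp_pos|].
      apply (diff_bound a b d delta s c); auto; lra. }
    set (W := delta * sqrt b + delta * sqrt d + s * ln b + s * ln (1 + c)).
    assert (HW : Rmax (delta * sqrt a + s * ln a) (delta * sqrt b + s * ln b) <= W).
    { assert (sqrt a <= sqrt b + sqrt d).
      { eapply Rle_trans; [apply sqrt_le_1_alt; apply Hadd|]. apply sqrt_add_le; lra. }
      assert (ln a <= ln (1 + c) + ln b).
      { rewrite <- ln_mult by lra. apply ln_le; lra. }
      assert (delta * sqrt a <= delta * (sqrt b + sqrt d)) by (apply Rmult_le_compat_l; lra).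
      assert (s * ln a <= s * (ln (1 + c) + ln b)) by (apply Rmult_le_compat_l; lra).
      assert (0 <= s * ln (1 + c)) by (assert (0 <= ln (1 + c)) by (rewrite <- ln_1; apply ln_le; lra); nra).
      pose proof (sqrt_pos d).
      apply Rmax_lub; unfold W; nra. }
    assert (Hla : ln (1 - c) + ln b <= ln a).
    { rewrite <- ln_mult by lra. apply ln_le; nra. }
    assert (Hsl : s * ln (1 + c) <= s * ln 2) by (apply Rmult_le_compat_l; lra).
    assert (E : (delta + s) * / (1 - c) * d * / sqrt b
                = (delta + s) * exp (- ln (1 - c) + ln d + - (ln b / 2))).
    { rewrite !exp_plus, !exp_Ropp, exp_ln, exp_ln, <- sqrt_exp by lra. ring. }
    rewrite E.
    set (LHSexp := W + (- ln (1 - c) + ln d + - (ln b / 2))).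
    apply Rle_trans with ((delta + s) * exp LHSexp).
    { unfold LHSexp. rewrite (exp_plus W).
      pose proof (exp_le _ _ HW). pose proof (exp_pos (- ln (1 - c) + ln d + - (ln b / 2))).
      set (M := exp (Rmax (delta * sqrt a + s * ln a) (delta * sqrt b + s * ln b))) in *.
      set (e := exp (- ln (1 - c) + ln d + - (ln b / 2))) in *.
      replace (M * ((delta + s) * e)) with ((delta + s) * (M * e)) by ring.
      apply Rmult_le_compat_l; [lra|]. apply Rmult_le_compat_r; lra. }
    rewrite <- !exp_plus.
    replace ((delta + s + 2) * exp K *
      exp (delta * sqrt b + (s - 3 / 4) * ln b + (delta * sqrt d + 1 * ln d) + 1 / 4 * ln a))
      with ((delta + s + 2) * exp (K + (delta * sqrt b + (s - 3 / 4) * ln b + (delta * sqrt d + 1 * ln d) + 1 / 4 * ln a)))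
      by (rewrite exp_plus; ring).
    assert (LHSexp <= K + (delta * sqrt b + (s - 3 / 4) * ln b + (delta * sqrt d + 1 * ln d) + 1 / 4 * ln a)).
    { unfold LHSexp, W, K. lra. }
    pose proof (exp_le _ _ H0). pose proof (exp_pos LHSexp). nra.
  -
    intros xi eta H.
    destruct (abs_facts xi eta) as [F1 F2].
    set (a := jb xi). set (b := jb eta). set (d := jb (xi - eta)).
    assert (Ha : 0 < a) by apply jb_pos. assert (Hb : 1 <= b) by apply jb_ge1.
    assert (Hd : 1 <= d) by apply jb_ge1.
    assert (Hbd : b <= 1 * d) by (apply jb_scale; nra).
    assert (Hadd : a <= b + d) by apply jb_a_le.
    rewrite !Aw_exp. fold a b d.
    rewrite <- exp_plus.
    rewrite Rmult_assoc, <- exp_plus.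
    apply two.
    + assert (sqrt a <= sqrt b + sqrt d).
      { eapply Rle_trans; [apply sqrt_le_1_alt; apply Hadd|]. apply sqrt_add_le; lra. }
      assert (ln a <= ln 2 + ln d).
      { rewrite <- ln_mult by lra. apply ln_le; lra. }
      assert (delta * sqrt a <= delta * (sqrt b + sqrt d)) by (apply Rmult_le_compat_l; lra).
      assert (s * ln a <= s * (ln 2 + ln d)) by (apply Rmult_le_compat_l; lra).
      unfold K. lra.
    + assert (ln b <= ln d) by (apply ln_le; lra).
      assert (s * ln b <= s * ln d) by (apply Rmult_le_compat_l; lra).
      pose proof (sqrt_pos d).
      assert (0 <= delta * sqrt d) by nra.
      unfold K. lra.
  -
    intros xi eta H H'.
    destruct (abs_facts xi eta) as [F1 F2].
    set (a := jb xi). set (b := jb eta). set (d := jb (xi - eta)).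
    assert (Ha : 0 < a) by apply jb_pos. assert (Hb : 1 <= b) by apply jb_ge1.
    assert (Hd : 1 <= d) by apply jb_ge1.
    assert (Hdb : d <= / c * b) by (apply jb_scale; auto).
    assert (Hbd : b <= / c * d).
    { apply jb_scale; auto.
      replace (Rabs eta) with (/ c * (c * Rabs eta)) by (field; lra).
      apply Rmult_le_compat_l; lra. }
    assert (Hadd : a <= b + d) by apply jb_a_le.
    assert (Lbd : ln b <= - ln c + ln d).
    { rewrite <- ln_Rinv by lra. rewrite <- ln_mult by lra. apply ln_le; lra. }
    rewrite !Aw_exp. fold a b d.
    rewrite <- exp_plus.
    rewrite Rmult_assoc, <- exp_plus.
    apply two.
    + assert (sqrt a <= sqrt b + sqrt d).
      { eapply Rle_trans; [apply sqrt_le_1_alt; apply Hadd|]. apply sqrt_add_le; lra. }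
      assert (ln a <= ln (1 + / c) + ln b).
      { rewrite <- ln_mult by lra. apply ln_le; nra. }
      assert (delta * sqrt a <= delta * (sqrt b + sqrt d)) by (apply Rmult_le_compat_l; lra).
      assert (s * ln a <= s * (ln (1 + / c) + ln b)) by (apply Rmult_le_compat_l; lra).
      unfold K. lra.
    + pose proof (sqrt_pos d).
      assert (0 <= delta * sqrt d) by nra.
      unfold K. lra.
Qed.
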